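(* Let $(\nu_n)_{n\ge1}$ be a sequence of probability measures on $\mathbb{Z}$. The following are equivalent: (1) for every $\delta>0$, $\displaystyle\limsup_{n\to\infty}\ \sup_{\delta<|t|\le 1/2}|\hat{\nu}_n(t)|<1$; (2) there exist a constant $C>0$ and an integer $N_0$ such that $|\hat{\nu}_n(t)|\le e^{-Ct^2}$ for all $n>N_0$ and all $t\in[-1/2,1/2)$.
   Context: The Fourier transform of a probability measure $\nu$ on $\mathbb{Z}$ is $\hat{\nu}(t)=\sum_{k\in\mathbb{Z}}\nu(k)e^{2\pi ikt}$, $t\in[-1/2,1/2)$. *)

(* Defs.v *)
From Stdlib Require Import Reals ZArith ClassicalEpsilon.
Open Scope R_scope.

(* A probability measure on Z, given by its mass function.  The two-sided
   series sum_{k in Z} nu k is enumerated as sum_{n>=0} (nu n + nu (-n-1)). *)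
Definition is_prob_Z (nu : Z -> R) : Prop :=
  (forall k, 0 <= nu k) /\
  infinite_sum (fun n => nu (Z.of_nat n) + nu (- Z.of_nat (S n))%Z) 1.

Definition series (a : nat -> R) : R :=
  epsilon (inhabits 0) (fun l => infinite_sum a l).

(* Real and imaginary parts of hat nu (t) = sum_k nu k e^{2 pi i k t}. *)
Definition fourier_re (nu : Z -> R) (t : R) : R :=
  series (fun n =>
    nu (Z.of_nat n) * cos (2 * PI * IZR (Z.of_nat n) * t)
    + nu (- Z.of_nat (S n))%Z * cos (2 * PI * IZR (- Z.of_nat (S n))%Z * t)).

Definition fourier_im (nu : Z -> R) (t : R) : R :=
  series (fun n =>
    nu (Z.of_nat n) * sin (2 * PI * IZR (Z.of_nat n) * t)
    + nu (- Z.of_nat (S n))%Z * sin (2 * PI * IZR (- Z.of_nat (S n))%Z * t)).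

Definition fourier_abs (nu : Z -> R) (t : R) : R :=
  sqrt (fourier_re nu t ^ 2 + fourier_im nu t ^ 2).

(* Main.v *)
Require Import Defs.
From Stdlib Require Import Reals ZArith Lra Lia Psatz ClassicalEpsilon FunctionalExtensionality.
Open Scope R_scope.

Lemma is_sum_ext (f g : nat -> R) l : infinite_sum f l -> (forall n, f n = g n) -> infinite_sum g l.
Proof.
  intros H E eps He. destruct (H eps He) as [N HN]. exists N. intros n Hn.
  rewrite <- (sum_eq f g n (fun i _ => E i)). auto.
Qed.

Lemma cv_const (x : R) : Un_cv (fun _ => x) x.
Proof. intros eps He. exists 0%nat. intros. unfold Rdist. rewrite Rminus_diag, Rabs_R0. lra. Qed.

Lemma sum_lin (f g : nat -> R) x y N :
  sum_f_R0 (fun n => x * f n + y * g n) N = x * sum_f_R0 f N + y * sum_f_R0 g N.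
Proof. induction N; simpl; [ring | rewrite IHN; ring]. Qed.

Lemma is_sum_lin (f g : nat -> R) l m x y : infinite_sum f l -> infinite_sum g m ->
  infinite_sum (fun n => x * f n + y * g n) (x * l + y * m).
Proof.
  intros Hf Hg.
  assert (H : Un_cv (fun N => x * sum_f_R0 f N + y * sum_f_R0 g N) (x*l + y*m)).
  { apply CV_plus; apply CV_mult; try apply cv_const; assumption. }
  intros eps He. destruct (H eps He) as [N HN]. exists N. intros n Hn.
  rewrite sum_lin. apply HN; auto.
Qed.

Lemma is_sum_le (f g : nat -> R) l m : infinite_sum f l -> infinite_sum g m ->
  (forall n, f n <= g n) -> l <= m.
Proof.
  intros Hf Hg H. apply (@Rle_cv_lim (sum_f_R0 f) (sum_f_R0 g) l m); auto.
  intro n. induction n; simpl; auto. apply Rplus_le_compat; auto.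
Qed.

Lemma conv_bd (f p : nat -> R) : (forall n, - p n <= f n <= p n) -> infinite_sum p 1 ->
  exists l, infinite_sum f l.
Proof.
  intros Hb Hp.
  assert (H2 : infinite_sum (fun n => 2 * p n + 0 * p n) (2 * 1 + 0 * 1)) by (apply is_sum_lin; auto).
  destruct (Rseries_CV_comp (fun n => 1 * f n + 1 * p n) (fun n => 2 * p n + 0 * p n)) as [l Hl].
  { intro n. specialize (Hb n). lra. }
  { exists (2*1+0*1). exact H2. }
  exists (1 * l + (-1) * 1).
  apply is_sum_ext with (fun n => 1 * (1 * f n + 1 * p n) + (-1) * p n).
  - apply is_sum_lin; auto.
  - intro; ring.
Qed.

Lemma series_eq (f : nat -> R) l : infinite_sum f l -> series f = l.
Proof.
  intro H. unfold series. apply (uniqueness_sum f).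
  - apply (epsilon_spec (inhabits 0) (fun l => infinite_sum f l)). eauto.
  - auto.
Qed.

Lemma cs_le a b x y : a^2 + b^2 = 1 -> a*x + b*y <= sqrt (x^2 + y^2).
Proof.
  intros H. destruct (Rle_dec (a*x+b*y) 0).
  - pose proof (sqrt_pos (x^2+y^2)). lra.
  - rewrite <- (sqrt_pow2 (a*x+b*y)) by lra. apply sqrt_le_1_alt.
    assert (E: (a^2+b^2)*(x^2+y^2) - (a*x+b*y)^2 = (a*y-b*x)^2) by ring.
    rewrite H in E. pose proof (pow2_ge_0 (a*y-b*x)). lra.
Qed.

Lemma pt_ineq c s C S : c^2 + s^2 = 1 -> C^2 + S^2 = 1 ->
  1 - ((c^2 - s^2) * (2*C*C - 1) + (2*c*s) * (2*S*C)) <= 4 * (1 - (c*C + s*S)).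
Proof.
  intros H1 H2.
  assert (E : (c*C+s*S)^2 + (c*S - s*C)^2 = 1).
  { replace 1 with ((c^2+s^2)*(C^2+S^2)) by (rewrite H1, H2; ring). ring. }
  assert (E2 : (c^2 - s^2) * (2*C*C - 1) + (2*c*s) * (2*S*C) = 2*(c*C+s*S)^2 - 1).
  { replace (2*C*C - 1) with (C^2 - S^2) by nra.
    replace ((c ^ 2 - s ^ 2) * (C ^ 2 - S ^ 2) + 2 * c * s * (2 * S * C))
      with ((c*C+s*S)^2 - (c*S - s*C)^2) by ring. lra. }
  rewrite E2.
  assert (E3 : 4 * (1 - (c*C+s*S)) - (1 - (2 * (c*C+s*S)^2 - 1)) = 2 * (1 - (c*C+s*S))^2) by ring.
  pose proof (pow2_ge_0 (1 - (c*C+s*S))). lra.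
Qed.

Lemma cs_le1 c s C S : c^2 + s^2 = 1 -> C^2 + S^2 = 1 -> c*C + s*S <= 1.
Proof.
  intros H1 H2.
  assert (E : (c*C+s*S)^2 + (c*S - s*C)^2 = 1).
  { replace 1 with ((c^2+s^2)*(C^2+S^2)) by (rewrite H1, H2; ring). ring. }
  pose proof (pow2_ge_0 (c*S - s*C)). nra.
Qed.

Lemma cs1 x : cos x ^ 2 + sin x ^ 2 = 1.
Proof. pose proof (sin2_cos2 x). unfold Rsqr in *. nra. Qed.

Lemma key nu t : is_prob_Z nu ->
  0 <= 1 - fourier_abs nu t /\ 1 - fourier_abs nu (2*t) <= 4 * (1 - fourier_abs nu t).
Proof.
  intros [Hpos Hsum].
  set (P := fun n:nat => nu (Z.of_nat n)).
  set (Q := fun n:nat => nu (- Z.of_nat (S n))%Z).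
  set (a := fun n:nat => 2*PI*IZR (Z.of_nat n)*t).
  set (b := fun n:nat => 2*PI*IZR (- Z.of_nat (S n))%Z*t).
  set (fX := fun n => P n * cos (a n) + Q n * cos (b n)).
  set (fY := fun n => P n * sin (a n) + Q n * sin (b n)).
  set (fX2 := fun n => P n * cos (2 * a n) + Q n * cos (2 * b n)).
  set (fY2 := fun n => P n * sin (2 * a n) + Q n * sin (2 * b n)).
  assert (HP : forall n, 0 <= P n) by (intro; apply Hpos).
  assert (HQ : forall n, 0 <= Q n) by (intro; apply Hpos).
  assert (HS : infinite_sum (fun n => P n + Q n) 1) by exact Hsum.
  assert (R1 : fourier_re nu t = series fX) by reflexivity.
  assert (I1 : fourier_im nu t = series fY) by reflexivity.
  assert (R2 : fourier_re nu (2*t) = series fX2).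
  { unfold fourier_re. f_equal. apply functional_extensionality. intro n.
    unfold fX2, P, Q, a, b. f_equal; f_equal; f_equal; ring. }
  assert (I2 : fourier_im nu (2*t) = series fY2).
  { unfold fourier_im. f_equal. apply functional_extensionality. intro n.
    unfold fY2, P, Q, a, b. f_equal; f_equal; f_equal; ring. }
  destruct (conv_bd fX (fun n => P n + Q n)) as [X HX]; auto.
  { intro n. unfold fX. pose proof (COS_bound (a n)). pose proof (COS_bound (b n)).
    pose proof (HP n); pose proof (HQ n). nra. }
  destruct (conv_bd fY (fun n => P n + Q n)) as [Y HY]; auto.
  { intro n. unfold fY. pose proof (SIN_bound (a n)). pose proof (SIN_bound (b n)).
    pose proof (HP n); pose proof (HQ n). nra. }
  destruct (conv_bd fX2 (fun n => P n + Q n)) as [X2 HX2]; auto.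
  { intro n. unfold fX2. pose proof (COS_bound (2*a n)). pose proof (COS_bound (2*b n)).
    pose proof (HP n); pose proof (HQ n). nra. }
  destruct (conv_bd fY2 (fun n => P n + Q n)) as [Y2 HY2]; auto.
  { intro n. unfold fY2. pose proof (SIN_bound (2*a n)). pose proof (SIN_bound (2*b n)).
    pose proof (HP n); pose proof (HQ n). nra. }
  unfold fourier_abs. rewrite R1, I1, R2, I2, (series_eq _ _ HX), (series_eq _ _ HY),
    (series_eq _ _ HX2), (series_eq _ _ HY2).
  pose proof (sqrt_pos (X^2+Y^2)) as HA0.
  pose proof (sqrt_pos (X2^2+Y2^2)) as HB0.
  destruct (Req_dec (sqrt (X^2+Y^2)) 0) as [E0|NE0].
  { rewrite E0. lra. }
  set (A := sqrt (X^2+Y^2)) in *.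
  assert (HA : 0 < A) by lra.
  assert (AA : A * A = X^2 + Y^2) by (apply sqrt_sqrt; nra).
  set (c := X / A). set (s := Y / A).
  assert (Hcs : c^2 + s^2 = 1).
  { unfold c, s. field_simplify; [|lra]. rewrite <- AA. field. lra. }
  assert (HcA : c * X + s * Y = A).
  { unfold c, s. field_simplify; [|lra]. replace (X^2+Y^2) with (A*A) by lra. field. lra. }
  set (Zf := fun n => P n * (1 - (c * cos (a n) + s * sin (a n)))
                   + Q n * (1 - (c * cos (b n) + s * sin (b n)))).
  assert (HZ : infinite_sum Zf (1*(1*1 + (-c)*X) + (-s)*Y)).
  { apply is_sum_ext with (fun n => 1*(1*(P n+Q n) + (-c)*fX n) + (-s)*fY n).
    - apply is_sum_lin; [apply is_sum_lin|]; auto.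
    - intro n. unfold Zf, fX, fY. ring. }
  set (c2 := c^2 - s^2). set (s2 := 2*c*s).
  set (Wf := fun n => P n * (1 - (c2 * (2 * cos (a n) * cos (a n) - 1) + s2 * (2 * sin (a n) * cos (a n))))
                   + Q n * (1 - (c2 * (2 * cos (b n) * cos (b n) - 1) + s2 * (2 * sin (b n) * cos (b n))))).
  assert (HW : infinite_sum Wf (1*(1*1 + (-c2)*X2) + (-s2)*Y2)).
  { apply is_sum_ext with (fun n => 1*(1*(P n+Q n) + (-c2)*fX2 n) + (-s2)*fY2 n).
    - apply is_sum_lin; [apply is_sum_lin|]; auto.
    - intro n. unfold Wf, fX2, fY2. rewrite !cos_2a_cos, !sin_2a. ring. }
  split.
  - assert (H0 : infinite_sum (fun n => 0 * Zf n + 0 * Zf n) (0 * (1*(1*1 + (-c)*X) + (-s)*Y) + 0 * (1*(1*1 + (-c)*X) + (-s)*Y)))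
      by (apply is_sum_lin; auto).
    pose proof (is_sum_le _ _ _ _ H0 HZ) as L.
    assert (HZn : forall n, 0 * Zf n + 0 * Zf n <= Zf n) by (intro n; unfold Zf;
      pose proof (cs_le1 c s (cos (a n)) (sin (a n)) Hcs (cs1 _));
      pose proof (cs_le1 c s (cos (b n)) (sin (b n)) Hcs (cs1 _));
      pose proof (HP n); pose proof (HQ n); nra).
    pose proof (L HZn). lra.
  - assert (H4 : infinite_sum (fun n => 4 * Zf n + 0 * Zf n) (4 * (1*(1*1 + (-c)*X) + (-s)*Y) + 0 * (1*(1*1 + (-c)*X) + (-s)*Y)))
      by (apply is_sum_lin; auto).
    assert (L : 1*(1*1 + (-c2)*X2) + (-s2)*Y2 <= 4 * (1*(1*1 + (-c)*X) + (-s)*Y) + 0 * (1*(1*1 + (-c)*X) + (-s)*Y)).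
    { apply (is_sum_le _ _ _ _ HW H4). intro n. unfold Wf, Zf, c2, s2.
      pose proof (pt_ineq c s (cos (a n)) (sin (a n)) Hcs (cs1 _)) as J1.
      pose proof (pt_ineq c s (cos (b n)) (sin (b n)) Hcs (cs1 _)) as J2.
      apply Rmult_le_compat_l with (r := P n) in J1; [|apply HP].
      apply Rmult_le_compat_l with (r := Q n) in J2; [|apply HQ].
      lra. }
    assert (Hcs2 : c2^2 + s2^2 = 1).
    { unfold c2, s2. replace ((c ^ 2 - s ^ 2) ^ 2 + (2 * c * s) ^ 2) with ((c^2+s^2)^2) by ring.
      rewrite Hcs. ring. }
    pose proof (cs_le c2 s2 X2 Y2 Hcs2). lra.
Qed.

Lemma half_per nu : fourier_abs nu (1/2) = fourier_abs nu (-(1/2)).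
Proof.
  unfold fourier_abs, fourier_re, fourier_im.
  assert (Hc : forall k, cos (2 * PI * IZR k * (-(1/2))) = cos (2 * PI * IZR k * (1/2))).
  { intro k. replace (2 * PI * IZR k * (-(1/2))) with (- (2 * PI * IZR k * (1/2))) by ring.
    apply cos_neg. }
  assert (Hs : forall k, sin (2 * PI * IZR k * (-(1/2))) = sin (2 * PI * IZR k * (1/2))).
  { intro k. rewrite !sin_eq_0_1; auto.
    - exists k. field.
    - exists (-k)%Z. rewrite opp_IZR. field. }
  f_equal. f_equal; f_equal; f_equal; apply functional_extensionality; intro n;
    rewrite ?Hc, ?Hs; reflexivity.
Qed.

Lemma inr_pow n : INR n + 1 <= 2 ^ n.
Proof.
  induction n. simpl; lra.
  rewrite S_INR. simpl. pose proof (pos_INR n). lra.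
Qed.

Lemma iter nu m : is_prob_Z nu -> 0 < m ->
  (forall t, 1/4 < Rabs t <= 1/2 -> m <= 1 - fourier_abs nu t) ->
  forall k t, / 2 ^ (k + 2) < Rabs t <= 1/2 -> m * t^2 <= 1 - fourier_abs nu t.
Proof.
  intros Hp Hm Hb k. induction k; intros t Ht.
  - simpl in Ht. pose proof (Hb t ltac:(lra)).
    assert (0 <= t^2 <= 1/4).
    { rewrite <- pow2_abs. split; [apply pow2_ge_0| ]. pose proof (Rabs_pos t). nra. }
    nra.
  - set (e := 2 ^ (k+2)) in *.
    assert (He : 4 <= e).
    { unfold e. rewrite pow_add. pose proof (inr_pow k). pose proof (pos_INR k). simpl. lra. }
    assert (E : 2 ^ (S k + 2) = 2 * e).
    { unfold e. replace (S k + 2)%nat with (S (k+2)) by lia. reflexivity. }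
    rewrite E in Ht.
    assert (Hinv : / (2 * e) = / e / 2) by (field; lra).
    assert (0 < / e <= 1/4).
    { split. apply Rinv_0_lt_compat; lra.
      replace (1/4) with (/4) by field. apply Rinv_le_contravar; lra. }
    destruct (Rlt_or_le (/ e) (Rabs t)) as [Hl|Hl].
    + apply IHk. lra.
    + assert (A2 : Rabs (2*t) = 2 * Rabs t).
      { rewrite Rabs_mult, Rabs_right; lra. }
      pose proof (IHk (2*t) ltac:(rewrite A2; lra)) as I.
      destruct (key nu t Hp) as [_ K].
      replace (m * (2*t)^2) with (4 * (m * t^2)) in I by ring. lra.
Qed.

Theorem lemma2p1p7 (nu : nat -> Z -> R)
  (Hnu : forall n : nat, (1 <= n)%nat -> is_prob_Z (nu n)) :
  (forall delta : R, 0 < delta ->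
     exists r : R, r < 1 /\
       exists N : nat, forall n : nat, (N < n)%nat ->
         forall t : R, delta < Rabs t <= 1/2 -> fourier_abs (nu n) t <= r)
  <->
  (exists C : R, 0 < C /\
     exists N0 : nat, forall n : nat, (N0 < n)%nat ->
       forall t : R, -(1/2) <= t < 1/2 ->
         fourier_abs (nu n) t <= exp (- C * t ^ 2)).
Proof.
  split.
  - intros H1. destruct (H1 (1/4) ltac:(lra)) as [r [Hr [N HN]]].
    exists (1 - r). split; [lra|]. exists N. intros n Hn t Ht.
    assert (Hp : is_prob_Z (nu n)) by (apply Hnu; lia).
    destruct (key (nu n) t Hp) as [K0 _].
    destruct (Req_dec t 0) as [T0|T0].
    + subst t. replace (- (1 - r) * 0 ^ 2) with 0 by ring. rewrite exp_0. lra.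
    + assert (Hat : 0 < Rabs t) by (apply Rabs_pos_lt; auto).
      destruct (archimed_cor1 (Rabs t) Hat) as [k [Hk Hk0]].
      assert (Hle : / 2 ^ (k + 2) <= / INR k).
      { apply Rinv_le_contravar. apply lt_0_INR; lia.
        rewrite pow_add. pose proof (inr_pow k). simpl. pose proof (pos_INR k). nra. }
      assert (Rabs t <= 1/2) by (apply Rabs_le; lra).
      pose proof (iter (nu n) (1 - r) Hp ltac:(lra)
        (fun t Ht => ltac:(pose proof (HN n Hn t Ht); lra)) k t ltac:(lra)).
      pose proof (exp_ineq1_le (- (1 - r) * t ^ 2)). lra.
  - intros [C [HC [N0 H2]]] delta Hd.
    exists (exp (- C * delta^2)). split.
    { rewrite <- exp_0. apply exp_increasing. pose proof (pow_lt delta 2 Hd). nra. }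
    exists N0. intros n Hn t Ht.
    assert (Hmain : forall t, delta < Rabs t <= 1/2 -> -(1/2) <= t < 1/2 ->
              fourier_abs (nu n) t <= exp (- C * delta ^ 2)).
    { intros u Hu Hu2. eapply Rle_trans. apply (H2 n Hn u Hu2).
      assert (delta^2 < u^2).
      { rewrite <- (pow2_abs u). pose proof (Rabs_pos u). simpl; rewrite !Rmult_1_r; apply Rmult_le_0_lt_compat; lra. }
      left. apply exp_increasing. nra. }
    destruct (Req_dec t (1/2)) as [E|E].
    + subst t. rewrite half_per. apply Hmain.
      * rewrite Rabs_left; lra.
      * lra.
    + apply Hmain; auto.
      pose proof (Rle_abs t). pose proof (Rle_abs (-t)). rewrite Rabs_Ropp in *. lra.
Qed.
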